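(* Let $P\subset\mathbb{R}^{n+1}$ be an $n$-dimensional lattice polytope contained in the affine hyperplane $\{x_{n+1}=1\}$, of degree $d$, let $x$ be a lattice point in the relative interior of $(n-d+1)P$, and let $S\subset P$ be an $n$-dimensional lattice simplex with vertices $v_0,\dots,v_n$ such that $x$ lies in the cone spanned by $S$. If $y$ is a point in the cone spanned by $k$ vertices of $P$, then $|V^+(y)|\le|Z^-(y)|+k$.
   Context: Lattice points are points of $\mathbb{Z}^{n+1}$. The degree $d$ of $P$ is the degree of the $h^*$-polynomial $h^*_P(t)$ defined by $\sum_{m\ge0}|mP\cap\mathbb{Z}^{n+1}|t^m=h^*_P(t)/(1-t)^{n+1}$; equivalently, $d$ is the largest nonnegative integer such that $(n-d)P$ has no lattice points in its relative interior. Every $y\in\mathbb{R}^{n+1}$ is written uniquely as $y=b_0(y)v_0+\dots+b_n(y)v_n$. $Z$ is the set of vertices $v_i$ of $S$ with $b_i(x)=0$; $V$ is the set of vertices $v_j$ of $S$ with $b_j(x)$ a positive integer. For $y\in\mathbb{R}^{n+1}$: $Z^+(y)$ (resp. $Z^-(y)$) is the set of $v_i\in Z$ with $b_i(y)>0$ (resp. $<0$), and $V^+(y)$ (resp. $V^-(y)$) is the set of $v_j\in V$ with $b_j(y)>0$ (resp. $<0$). *)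

(* Defs.v *)
From HB Require Import structures.
From mathcomp Require Import all_boot all_order all_algebra.
From mathcomp Require Import reals.
Set Implicit Arguments. Unset Strict Implicit. Unset Printing Implicit Defensive.
Import Order.TTheory GRing.Theory Num.Theory.
Local Open Scope ring_scope.

Section Defs.
Variable R : realType.

Definition is_lattice (m : nat) (z : 'rV[R]_m) : Prop :=
  forall i, z 0 i \is a Num.int.

Definition in_conv (m : nat) (s : seq 'rV[R]_m) (z : 'rV[R]_m) : Prop :=
  exists l : 'I_(size s) -> R,
    (forall i, 0 <= l i) /\ \sum_i l i = 1 /\ z = \sum_i l i *: s`_i.

Definition in_cone (m : nat) (s : seq 'rV[R]_m) (z : 'rV[R]_m) : Prop :=
  exists l : 'I_(size s) -> R,
    (forall i, 0 <= l i) /\ z = \sum_i l i *: s`_i.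

Definition in_aff (m : nat) (s : seq 'rV[R]_m) (z : 'rV[R]_m) : Prop :=
  exists l : 'I_(size s) -> R,
    \sum_i l i = 1 /\ z = \sum_i l i *: s`_i.

Definition in_relint (m : nat) (s : seq 'rV[R]_m) (z : 'rV[R]_m) : Prop :=
  in_conv s z /\
  exists e : R, 0 < e /\
    forall w, in_aff s w -> (forall i, `|w 0 i - z 0 i| < e) -> in_conv s w.

(* the dilation k * conv s = conv (k * s) *)
Definition dilate (m : nat) (k : nat) (s : seq 'rV[R]_m) : seq 'rV[R]_m :=
  map (fun p => k%:R *: p) s.

Definition is_vertex (m : nat) (s : seq 'rV[R]_m) (v : 'rV[R]_m) : Prop :=
  in_conv s v /\
  forall a b (t : R), in_conv s a -> in_conv s b -> 0 < t < 1 ->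
    v = t *: a + (1 - t) *: b -> a = b.

(* P = conv vs is an n-dimensional lattice polytope in {x_{n+1} = 1}:
   generators are lattice points with last coordinate 1, and their affine
   hull is n-dimensional (equivalently, their linear span is R^{n+1}). *)
Definition lattice_polytope_hyp (n : nat) (vs : seq 'rV[R]_n.+1) : Prop :=
  (forall p, p \in vs -> is_lattice p /\ p 0 ord_max = 1) /\
  \rank (\matrix_(i < size vs) vs`_i) = n.+1.

(* degree d of P (= n+1 - codegree): kP has no relative-interior lattice
   point for 1 <= k <= n-d, while (n-d+1)P has one. *)
Definition has_degree (n : nat) (vs : seq 'rV[R]_n.+1) (d : nat) : Prop :=
  (d <= n)%N /\
  (forall k : nat, (0 < k <= n - d)%N ->
     ~ (exists z, is_lattice z /\ in_relint (dilate k vs) z)) /\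
  (exists z, is_lattice z /\ in_relint (dilate (n - d + 1) vs) z).

Definition vmx (n : nat) (v : 'I_n.+1 -> 'rV[R]_n.+1) : 'M[R]_n.+1 :=
  \matrix_(i < n.+1) v i.

Definition lattice_simplex_in (n : nat) (vs : seq 'rV[R]_n.+1)
  (v : 'I_n.+1 -> 'rV[R]_n.+1) : Prop :=
  (forall i, is_lattice (v i)) /\ (forall i, in_conv vs (v i)) /\
  vmx v \in unitmx.

(* barycentric coordinates: y = \sum_i b_i(y) v_i *)
Definition bary (n : nat) (v : 'I_n.+1 -> 'rV[R]_n.+1) (y : 'rV[R]_n.+1)
  (i : 'I_n.+1) : R := (y *m invmx (vmx v)) 0 i.

Definition Zset (n : nat) (v : 'I_n.+1 -> 'rV[R]_n.+1) (x : 'rV[R]_n.+1)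
  : {set 'I_n.+1} := [set i | bary v x i == 0].

Definition Vset (n : nat) (v : 'I_n.+1 -> 'rV[R]_n.+1) (x : 'rV[R]_n.+1)
  : {set 'I_n.+1} := [set j | (bary v x j \is a Num.nat) && (0 < bary v x j)].

Definition Zminus (n : nat) (v : 'I_n.+1 -> 'rV[R]_n.+1) (x y : 'rV[R]_n.+1)
  : {set 'I_n.+1} := [set i in Zset v x | bary v y i < 0].

Definition Vplus (n : nat) (v : 'I_n.+1 -> 'rV[R]_n.+1) (x y : 'rV[R]_n.+1)
  : {set 'I_n.+1} := [set j in Vset v x | 0 < bary v y j].

End Defs.

(* Main.v *)
Require Import Defs.
From HB Require Import structures.
From mathcomp Require Import all_boot all_order all_algebra.
From mathcomp Require Import reals.
From mathcomp Require Import ring lra zify.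
Import Order.TTheory GRing.Theory Num.Theory.
Local Open Scope ring_scope.
Set Implicit Arguments. Unset Strict Implicit. Unset Printing Implicit Defensive.

Lemma sum_cast (V : zmodType) n1 n2 (e : n1 = n2) (F : 'I_n1 -> V) :
  \sum_(i < n1) F i = \sum_(i < n2) F (cast_ord (esym e) i).
Proof. by case: n2 / e; apply: eq_bigr => i _; rewrite cast_ord_id. Qed.

Section H.
Variable R : realType.
Variable m : nat.
Implicit Types (s : seq 'rV[R]_m.+1) (z : 'rV[R]_m.+1).

Definition ht z := z 0 ord_max.

Definition lin s z := exists l : 'I_(size s) -> R, z = \sum_i l i *: s`_i.

Lemma dilate_nth (h : nat) s i : (dilate h s)`_i = h%:R *: s`_i.
Proof.
case: (ltnP i (size s)) => hi; first by rewrite (nth_map 0).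
by rewrite !nth_default ?scaler0 // size_map.
Qed.

Lemma ht_sum s (l : 'I_(size s) -> R) :
  (forall p, p \in s -> ht p = 1) ->
  ht (\sum_i l i *: s`_i) = \sum_i l i.
Proof.
move=> hs; rewrite /ht summxE; apply: eq_bigr => i _.
by rewrite mxE; have := hs _ (mem_nth 0 (ltn_ord i)); rewrite /ht => ->; rewrite mulr1.
Qed.

Lemma conv_dilate (h : nat) s z : in_conv (dilate h s) z ->
  in_cone s z /\ exists l : 'I_(size s) -> R, \sum_i l i = h%:R /\ z = \sum_i l i *: s`_i.
Proof.
case=> l [l0 [l1 ->]].
have e : size (dilate h s) = size s by rewrite size_map.
set m' := fun i : 'I_(size s) => h%:R * l (cast_ord (esym e) i).
have E : \sum_i l i *: (dilate h s)`_i = \sum_i m' i *: s`_i.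
  rewrite (sum_cast e); apply: eq_bigr => i _.
  by rewrite dilate_nth scalerA mulrC.
rewrite E; split; first by exists m'; split => // i; rewrite /m' mulr_ge0.
exists m'; split => //.
by rewrite /m' -mulr_sumr -(sum_cast e (fun i => l i)) l1 mulr1.
Qed.

Lemma aff_dilate (h : nat) s z : in_aff (dilate h s) z ->
  exists l : 'I_(size s) -> R, \sum_i l i = h%:R /\ z = \sum_i l i *: s`_i.
Proof.
case=> l [l1 ->].
have e : size (dilate h s) = size s by rewrite size_map.
set m' := fun i : 'I_(size s) => h%:R * l (cast_ord (esym e) i).
have E : \sum_i l i *: (dilate h s)`_i = \sum_i m' i *: s`_i.
  rewrite (sum_cast e); apply: eq_bigr => i _.
  by rewrite dilate_nth scalerA mulrC.
rewrite E; exists m'; split => //.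
by rewrite /m' -mulr_sumr -(sum_cast e (fun i => l i)) l1 mulr1.
Qed.

Lemma dilate_aff (h : nat) s z (l : 'I_(size s) -> R) : (0 < h)%N ->
  \sum_i l i = h%:R -> z = \sum_i l i *: s`_i -> in_aff (dilate h s) z.
Proof.
move=> h0 l1 ->.
have e : size s = size (dilate h s) by rewrite size_map.
have hn : h%:R != 0 :> R by rewrite pnatr_eq0 -lt0n.
exists (fun i => l (cast_ord (esym e) i) / h%:R); split.
  by rewrite -mulr_suml -(sum_cast e (fun i => l i)) l1 divff.
rewrite (sum_cast e); apply: eq_bigr => i _.
by rewrite dilate_nth scalerA -mulrA mulVf // mulr1.
Qed.

Lemma dilate_conv (h : nat) s z (l : 'I_(size s) -> R) : (0 < h)%N ->
  (forall i, 0 <= l i) ->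
  \sum_i l i = h%:R -> z = \sum_i l i *: s`_i -> in_conv (dilate h s) z.
Proof.
move=> h0 l0 l1 ->.
have e : size s = size (dilate h s) by rewrite size_map.
have hn : h%:R != 0 :> R by rewrite pnatr_eq0 -lt0n.
exists (fun i => l (cast_ord (esym e) i) / h%:R); split; last split.
- by move=> i; rewrite divr_ge0.
- by rewrite -mulr_suml -(sum_cast e (fun i => l i)) l1 divff.
rewrite (sum_cast e); apply: eq_bigr => i _.
by rewrite dilate_nth scalerA -mulrA mulVf // mulr1.
Qed.

Lemma cone0 s : in_cone s 0.
Proof. exists (fun _ => 0); split => //; by rewrite big1 // => i _; rewrite scale0r. Qed.

Lemma coneD s p q : in_cone s p -> in_cone s q -> in_cone s (p + q).
Proof.
case=> a [a0 ->] [b [b0 ->]]; exists (fun i => a i + b i); split.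
  by move=> i; rewrite addr_ge0.
by rewrite -big_split; apply: eq_bigr => i _; rewrite scalerDl.
Qed.

Lemma coneZ s c p : 0 <= c -> in_cone s p -> in_cone s (c *: p).
Proof.
move=> c0 [a [a0 ->]]; exists (fun i => c * a i); split.
  by move=> i; rewrite mulr_ge0.
by rewrite scaler_sumr; apply: eq_bigr => i _; rewrite scalerA.
Qed.

Lemma cone_sum s (I : finType) (P : pred I) (F : I -> 'rV[R]_m.+1) :
  (forall i, P i -> in_cone s (F i)) -> in_cone s (\sum_(i | P i) F i).
Proof. move=> H; apply: big_ind => //; [exact: cone0 | exact: coneD]. Qed.

Lemma conv_cone s p : in_conv s p -> in_cone s p.
Proof. by case=> l [l0 [_ ->]]; exists l. Qed.

Lemma lin_cone s p : in_cone s p -> lin s p.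
Proof. by case=> l [_ ->]; exists l. Qed.

Lemma linD s p q : lin s p -> lin s q -> lin s (p + q).
Proof.
case=> a -> [b ->]; exists (fun i => a i + b i).
by rewrite -big_split; apply: eq_bigr => i _; rewrite scalerDl.
Qed.

Lemma linZ s c p : lin s p -> lin s (c *: p).
Proof.
case=> a ->; exists (fun i => c * a i).
by rewrite scaler_sumr; apply: eq_bigr => i _; rewrite scalerA.
Qed.

Lemma linB s p q : lin s p -> lin s q -> lin s (p - q).
Proof. by move=> hp hq; apply: linD => //; rewrite -scaleN1r; apply: linZ. Qed.

End H.

Section H2.
Variable R : realType.
Variable m : nat.
Implicit Types (s : seq 'rV[R]_m.+1) (z : 'rV[R]_m.+1).

Lemma htD (a b : 'rV[R]_m.+1) : ht (a + b) = ht a + ht b.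
Proof. by rewrite /ht mxE. Qed.
Lemma htZ c (a : 'rV[R]_m.+1) : ht (c *: a) = c * ht a.
Proof. by rewrite /ht mxE. Qed.
Lemma htN (a : 'rV[R]_m.+1) : ht (- a) = - ht a.
Proof. by rewrite /ht mxE. Qed.

Lemma cone_ht_conv s (h : nat) z : (forall p, p \in s -> ht p = 1) ->
  (0 < h)%N -> in_cone s z -> ht z = h%:R -> in_conv (dilate h s) z.
Proof.
move=> hs h0 [l [l0 Ez]] hz; apply: (dilate_conv h0 l0 _ Ez).
by rewrite -hz Ez ht_sum.
Qed.

Lemma lin_ht_aff s (h : nat) z : (forall p, p \in s -> ht p = 1) ->
  (0 < h)%N -> lin s z -> ht z = h%:R -> in_aff (dilate h s) z.
Proof.
move=> hs h0 [l Ez] hz; apply: (dilate_aff h0 _ Ez).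
by rewrite -hz Ez ht_sum.
Qed.

Lemma relint_shift s (c h : nat) x q (lam : R) :
  (forall p, p \in s -> ht p = 1) -> (0 < c)%N -> (0 < h)%N -> 0 < lam ->
  in_relint (dilate c s) x -> in_cone s q -> ht (lam *: x + q) = h%:R ->
  in_relint (dilate h s) (lam *: x + q).
Proof.
move=> hs c0 h0 l0 [Hx [e [e0 He]]] cq hz.
have [cx [lx [lx1 Ex]]] := conv_dilate Hx.
have hx : ht x = c%:R by rewrite Ex ht_sum.
split; first by apply: cone_ht_conv => //; apply: coneD => //; apply: coneZ => //; exact: ltW.
exists (lam * e); split; first by rewrite mulr_gt0.
move=> w' Hw' Hd.
have [lw [lw1 Ew]] := aff_dilate Hw'.
have hw : ht w' = h%:R by rewrite Ew ht_sum.
set z := lam *: x + q.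
set x' := x + lam^-1 *: (w' - z).
have lz : lin s z by apply: lin_cone; apply: coneD => //; apply: coneZ => //; exact: ltW.
have ax' : in_aff (dilate c s) x'.
  apply: lin_ht_aff => //.
    apply: linD; first exact: lin_cone.
    by apply: linZ; apply: linB => //; exists lw.
  by rewrite /x' htD htZ htD htN hw hz subrr mulr0 addr0.
have cl : forall i, `|x' 0 i - x 0 i| < e.
  move=> i; rewrite /x' !mxE addrAC subrr add0r normrM.
  have := Hd i; rewrite ger0_norm ?invr_ge0 ?ltW //.
  by move=> Hi; rewrite ltr_pdivrMl //; move: Hi; rewrite !mxE.
have [cx' _] := conv_dilate (He _ ax' cl).
have -> : w' = lam *: x' + q.
  rewrite /x' scalerDr scalerA mulfV ?gt_eqF // scale1r /z.
  by rewrite opprD !addrA subrK addrAC subrr add0r.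
apply: cone_ht_conv => //; last by rewrite -hw /x' scalerDr scalerA mulfV ?gt_eqF // scale1r /z opprD !addrA subrK addrAC subrr add0r.
by apply: coneD => //; apply: coneZ => //; exact: ltW.
Qed.

Lemma vertex_in s u : is_vertex s u -> u \in s.
Proof.
case=> [[l [l0 [l1 Eu]]] Hv].
have [i li] : exists i, 0 < l i.
  case: (boolP [exists i, 0 < l i]) => [/existsP //|].
  rewrite negb_exists => /forallP H.
  have : \sum_i l i <= 0 by apply: sumr_le0 => i _; have := H i; rewrite -leNgt.
  by rewrite l1 ler10.
have li1 : l i <= 1.
  by rewrite -l1 (bigD1 i) //= lerDl sumr_ge0.
set t := l i / 2.
have t0 : 0 < t by rewrite divr_gt0.
have t1 : t < 1.
  by rewrite /t ltr_pdivrMr // mul1r (le_lt_trans li1) // ltr1n.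
have nt : 1 - t != 0 by rewrite subr_eq0 eq_sym lt_eqF.
set l' := fun j => (l j - (j == i)%:R * t) / (1 - t).
have ca : in_conv s (s`_i).
  exists (fun j => (j == i)%:R); split; first by move=> j; rewrite ler0n.
  split; first by rewrite (bigD1 i) //= eqxx big1 ?addr0 // => j /negPf ->.
  by rewrite (bigD1 i) //= eqxx scale1r big1 ?addr0 // => j /negPf ->; rewrite scale0r.
have cb : in_conv s (\sum_j l' j *: s`_j).
  exists l'; split; last split => //.
  - move=> j; rewrite /l' divr_ge0 ?subr_ge0 //; last exact: ltW.
    case: eqP => [->|_]; last by rewrite mul0r.
    by rewrite mul1r /t ler_pdivrMr // ler_peMr ?ler1n // ltW.
  - rewrite /l' -mulr_suml sumrB l1 (bigD1 i) //= eqxx mul1r big1 ?addr0 ?divff //.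
    by move=> j /negPf ->; rewrite mul0r.
have E : u = t *: s`_i + (1 - t) *: \sum_j l' j *: s`_j.
  rewrite scaler_sumr /l'.
  have -> : \sum_j (1 - t) *: ((l j - (j == i)%:R * t) / (1 - t) *: s`_j)
     = \sum_j (l j *: s`_j - ((j == i)%:R * t) *: s`_j).
    apply: eq_bigr => j _; rewrite scalerA mulrC -mulrA mulVf // mulr1 scalerBl //.
  rewrite sumrB -Eu (bigD1 i) //= eqxx mul1r big1 ?addr0.
    by rewrite addrC subrK.
  by move=> j /negPf ->; rewrite mul0r scale0r.
have := Hv _ _ t ca cb; rewrite t0 t1 => /(_ isT E) Hab.
by rewrite E -Hab -scalerDl addrC subrK scale1r mem_nth.
Qed.

End H2.

Section H3.
Variable R : realType.

Lemma exists_small (I : finType) (c d : I -> R) : (forall i, 0 < d i) ->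
  exists e, 0 < e /\ forall e', 0 <= e' -> e' <= e -> forall i, e' * `|c i| <= d i.
Proof.
move=> d0.
set S := \sum_i `|c i| / d i.
have S0 : 0 <= S by apply: sumr_ge0 => i _; rewrite divr_ge0 // ltW.
have S1 : 0 < 1 + S by rewrite ltr_pwDl.
exists (1 + S)^-1; split; first by rewrite invr_gt0.
move=> e' e0 ee i.
apply: (le_trans (ler_wpM2r (normr_ge0 _) ee)).
rewrite mulrC -[_ * _^-1]/(_ / _) ler_pdivrMr //.
have Hi : `|c i| / d i <= S by rewrite /S (bigD1 i) //= lerDl sumr_ge0 // => j _; rewrite divr_ge0 // ltW.
have : `|c i| <= d i * S.
  by rewrite -ler_pdivrMl // mulrC.
by move/le_trans; apply; rewrite ler_pM2l // lerDr ler01.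
Qed.

Variable n : nat.
Variable v : 'I_n.+1 -> 'rV[R]_n.+1.
Hypothesis vu : vmx v \in unitmx.

Lemma bary_sum p : p = \sum_i bary v p i *: v i.
Proof.
rewrite {1}(_ : p = (p *m invmx (vmx v)) *m vmx v); last by rewrite mulmxKV.
by rewrite mulmx_sum_row; apply: eq_bigr => i _; rewrite /vmx rowK.
Qed.

Lemma bary_uniq p (l : 'I_n.+1 -> R) : p = \sum_i l i *: v i -> forall i, bary v p i = l i.
Proof.
move=> Ep i.
have : p = (\row_j l j) *m vmx v.
  by rewrite mulmx_sum_row Ep; apply: eq_bigr => j _; rewrite /vmx rowK mxE.
by move=> ->; rewrite /bary mulmxK // mxE.
Qed.

Lemma bary0 i : bary v 0 i = 0.
Proof. by rewrite /bary mul0mx mxE. Qed.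

End H3.
Unset Implicit Arguments. Set Strict Implicit.

Theorem lemma2p5 (R : realType) (n d k : nat) (vs : seq 'rV[R]_n.+1)
  (x : 'rV[R]_n.+1) (v : 'I_n.+1 -> 'rV[R]_n.+1)
  (w : seq 'rV[R]_n.+1) (y : 'rV[R]_n.+1) :
  lattice_polytope_hyp vs ->
  has_degree vs d ->
  is_lattice x ->
  in_relint (dilate (n - d + 1) vs) x ->
  lattice_simplex_in vs v ->
  in_cone [seq v i | i <- enum 'I_n.+1] x ->
  size w = k -> uniq w -> (forall u, u \in w -> is_vertex vs u) ->
  in_cone w y ->
  (#|Vplus v x y| <= #|Zminus v x y| + k)%N.
Proof.
move=> [Hvs _] [dn [Hdeg _]] Hxl Hxr [vlat [vconv vu]] Hxc hk _ hw [mu [mu0 Ey']].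
rewrite leqNgt; apply/negP => Hlt.
have hs : forall p, p \in vs -> ht p = 1 by move=> p /Hvs [].
have Ex := bary_sum vu x.
have Ey := bary_sum vu y.
have Vpm : forall i, i \in Vplus v x y ->
    [/\ bary v x i \is a Num.nat, 0 < bary v x i & 0 < bary v y i].
  by move=> i; rewrite !inE => /andP [/andP [-> ->] ->].
have Zmm : forall i, i \in Zminus v x y -> bary v x i = 0 /\ bary v y i < 0.
  by move=> i; rewrite !inE => /andP [/eqP -> ->].
have Zn : forall i, bary v x i = 0 -> i \notin Zminus v x y -> 0 <= bary v y i.
  by move=> i bi; rewrite !inE bi eqxx /= -leNgt.
case: (posnP k) => k0.
  move: Hlt; rewrite k0 addn0 => /(leq_ltn_trans (leq0n _)) /card_gt0P [j /Vpm [_ _]].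
  have y0 : y = 0.
    rewrite Ey' big1 // => i _.
    by have := ltn_ord i; rewrite {2}hk k0.
  by rewrite y0 bary0 ltxx.

have b0 : forall i, 0 <= bary v x i.
  case: Hxc => l [l0 El].
  have e : size [seq v i | i <- enum 'I_n.+1] = n.+1 by rewrite size_map size_enum_ord.
  have El' : x = \sum_i l (cast_ord (esym e) i) *: v i.
    rewrite El (sum_cast e); apply: eq_bigr => i _; congr (_ *: _).
    by rewrite (nth_map ord0) /= ?size_enum_ord // nth_ord_enum.
  by move=> i; rewrite (bary_uniq vu El').
have vht : forall i, ht (v i) = 1.
  by move=> i; case: (vconv i) => l [_ [l1 ->]]; rewrite ht_sum.
have wv : forall l : 'I_(size w), w`_l \in vs.
  by move=> l; apply: vertex_in; apply: hw; exact: mem_nth.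
have wht : forall l : 'I_(size w), ht w`_l = 1 by move=> l; apply: hs.
have htS : forall (I : finType) (P : pred I) (c : I -> R) (f : I -> 'rV[R]_n.+1),
    (forall i, ht (f i) = 1) -> ht (\sum_(i | P i) c i *: f i) = \sum_(i | P i) c i.
  move=> I P c f hf; rewrite /ht summxE; apply: eq_bigr => i _.
  by rewrite mxE; have := hf i; rewrite /ht => ->; rewrite mulr1.
have htS1 : forall (I : finType) (P : pred I) (f : I -> 'rV[R]_n.+1),
    (forall i, ht (f i) = 1) -> ht (\sum_(i | P i) f i) = #|P|%:R.
  move=> I P f hf; rewrite -sumr_const -(htS I P (fun _ => 1) f hf).
  by congr ht; apply: eq_bigr => i _; rewrite scale1r.
have hx : ht x = (n - d + 1)%:R.
  by have [_ [lx [lx1 ->]]] := conv_dilate Hxr.1; rewrite ht_sum.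
have hxb : ht x = \sum_i bary v x i by rewrite {1}Ex htS.
have cardV : (#|Vplus v x y| <= n - d + 1)%N.
  rewrite -(ler_nat R) -hx hxb.
  apply: (@le_trans _ _ (\sum_(i in Vplus v x y) bary v x i)).
    rewrite -sumr_const; apply: ler_sum => i /Vpm [bn bp _].
    by move: bp; case/natrP: bn => m ->; rewrite ltr0n ler1n.
  by rewrite [X in _ <= X](bigID (mem (Vplus v x y))) /= lerDl sumr_ge0.
set Zm := Zminus v x y.
set Vp := Vplus v x y.
set h := (n - d + 1 + #|Zm| + k - #|Vp|)%N.
have h0 : (0 < h)%N by rewrite /h /Zm /Vp; lia.
have hnd : (h <= n - d)%N by rewrite /h /Zm /Vp; lia.
have pos1 : forall i, 0 < (if 0 < bary v x i then bary v x i / 2 else 1).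
  by move=> i; case: ifP => // bp; rewrite divr_gt0.
have [e1 [e10 He1]] := @exists_small R _ (fun i => bary v y i) _ pos1.
have [e2 [e20 He2]] := @exists_small R _ mu (fun _ => 1) (fun _ => ltr01).
set eps := Num.min e1 e2.
have eps0 : 0 < eps by rewrite lt_min e10 e20.
have epse1 : eps <= e1 by rewrite ge_min lexx.
have epse2 : eps <= e2 by rewrite ge_min lexx orbT.
have He1' := He1 eps (ltW eps0) epse1.
have He2' := He2 eps (ltW eps0) epse2.
have pos2 : forall i, 0 < (if i \in Vp then eps * bary v y i else 1).
  by move=> i; case: ifP => // /Vpm [_ _ byp]; rewrite mulr_gt0.
have [l1 [l10 Hl1]] := @exists_small R _ (fun i => bary v x i) _ pos2.
set lam := Num.min l1 (1/2).
have lam0 : 0 < lam by rewrite lt_min l10 divr_gt0.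
have lam1 : lam <= l1 by rewrite ge_min lexx.
have Hl1' := Hl1 lam (ltW lam0) lam1.
have lam2 : lam <= 1/2 by rewrite ge_min lexx orbT.

have htA : forall (A : {set 'I_n.+1}), ht (\sum_(i in A) v i) = #|A|%:R.
  move=> A; rewrite /ht summxE (eq_bigr (fun _ => 1)) ?sumr_const //.
  by move=> i _; have := vht i.
have htW : ht (\sum_(l < size w) w`_l) = (size w)%:R.
  rewrite /ht summxE (eq_bigr (fun _ => 1)) ?sumr_const ?card_ord //.
  by move=> i _; have := wht i.
set a := fun i => (1 - lam) * bary v x i + (i \in Zm)%:R - (i \in Vp)%:R + eps * bary v y i.
have ha : forall i, 0 <= a i.
  move=> i; rewrite /a.
  have := He1' i; have := Hl1' i; rewrite /= ger0_norm ?b0 // => Hli He.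
  have nb := ler_norm (- bary v y i); rewrite normrN in nb.
  have nb' := ler_wpM2l (ltW eps0) nb.
  case Zi: (i \in Zm).
    have [bi byn] := Zmm i Zi.
    have Vi : (i \in Vp) = false by apply/negP => /Vpm [_]; rewrite bi ltxx.
    move: He; rewrite Vi bi ltxx /= ?mulr1n ?mulr0n => He; lra.
  case Vi: (i \in Vp).
    have [bn bp byp] := Vpm i Vi.
    have b1 : 1 <= bary v x i.
      by move: bp; case/natrP: bn => m ->; rewrite ltr0n ler1n.
    move: Hli; rewrite Vi /= ?mulr1n ?mulr0n => Hli; lra.
  have [bi|bp] : bary v x i = 0 \/ 0 < bary v x i.
    by have := b0 i; rewrite le_eqVlt => /orP [/eqP <-|->]; [left|right].
    have byp := Zn i bi (negbT Zi).
    have := mulr_ge0 (ltW eps0) byp.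
    rewrite bi /= ?mulr1n ?mulr0n => H; lra.
  move: He; rewrite bp => He.
  have H2 := ler_wpM2r (ltW bp) lam2.
  rewrite /= ?mulr1n ?mulr0n; lra.
set q := \sum_i a i *: v i + \sum_(l < size w) (1 - eps * mu l) *: w`_l.
have hm : forall l, 0 <= 1 - eps * mu l.
  by move=> l; have := He2' l; rewrite ger0_norm ?mu0 // subr_ge0.
have cq : in_cone vs q.
  apply: coneD; apply: cone_sum => i _; apply: coneZ.
  - exact: ha.
  - exact: conv_cone (vconv i).
  - exact: hm.
  - exact: conv_cone (hw _ (mem_nth 0 (ltn_ord i))).1.
set z := x + \sum_(i in Zm) v i - \sum_(i in Vp) v i + \sum_(l < size w) w`_l.
have Ez : z = lam *: x + q.
  have E1 : \sum_i a i *: v i = (1 - lam) *: x + \sum_(i in Zm) v i - \sum_(i in Vp) v i + eps *: y.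
    rewrite {1}Ex {1}Ey !scaler_sumr [\sum_(i in Zm) _]big_mkcond [\sum_(i in Vp) _]big_mkcond /=.
    rewrite -big_split -sumrB -big_split /=; apply: eq_bigr => i _.
    rewrite /a; case: (i \in Zm); case: (i \in Vp); apply/rowP => j; rewrite !mxE /=; ring.
  have E2 : \sum_(l < size w) (1 - eps * mu l) *: w`_l = \sum_(l < size w) w`_l - eps *: y.
    rewrite Ey' scaler_sumr -sumrB; apply: eq_bigr => l _.
    by rewrite scalerBl scale1r scalerA.
  rewrite /q E1 E2 /z; apply/rowP => j; rewrite !mxE; ring.
have hz : ht z = h%:R.
  rewrite /z !htD htN hx htA htA htW hk /h natrB; last by rewrite /Zm /Vp; lia.
  by rewrite !natrD; lra.
have latz : is_lattice z.
  move=> j; rewrite /z !mxE !summxE.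
  rewrite rpredD ?rpredB ?rpredD ?rpred_sum // => i _.
  - exact: vlat.
  - exact: vlat.
  - exact: (Hvs _ (wv i)).1.
have c0 : (0 < n - d + 1)%N by rewrite addn1.
have ri := @relint_shift R n vs (n - d + 1) h x q lam hs c0 h0 lam0 Hxr cq.
apply: (Hdeg h); first by rewrite h0 hnd.
exists z; split => //; rewrite Ez; apply: ri; by rewrite -Ez.
Qed.
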